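(* Let $x$ be a reference grid point in $\Omega=(-1,1)$ and $\phi$ a twice differentiable function defined in a neighborhood of the grid. Assume $K=\mathcal O(h^{-\alpha})$ and $L=\mathcal O(h^{-\beta})$ with $K\sqrt L\ge1$, $\alpha\in(0,1)$ and $\beta\in(0,2)$. Then the scheme $F^{1D,e,\delta}$ is consistent with $F^{1D}$ and has accuracy \[ F^{1D,e,\delta}[\phi](x)-F^{1D}[\phi](x)=\mathcal O\left(h^{1-\alpha}+h^{2-\beta}+h^{\min(2\alpha,\beta/2)}\right). \] Moreover, the optimal choice of $\alpha$ and $\beta$ (maximizing the resulting order) is $\alpha=1/3$, $\beta=4/3$, in which case the accuracy is $\mathcal O(h^{2/3})$.
   Context: $F^{1D}[u]=(u_x^2u_{xx})^{1/3}$ (real cube root). With $A(p,q)=(p^2q)^{1/3}$, $A^\delta(p,q)=\operatorname{sgn}(q)\min(\lvert A(p,q)\rvert,K\lvert p\rvert,L\lvert q\rvert)$ ($\operatorname{sgn}(0)=0$), $A^{\delta,\pm}(p,q)=A^\delta(p^\pm,q^\pm)$ where $x^+=\max(x,0)$, $x^-=\min(x,0)$, the scheme on the uniform grid of spacing $h$ is $-F^{1D,e,\delta}[u]=A^{\delta,+}(\lvert u_x^h\rvert^+,-u_{xx}^h)+A^{\delta,-}(-\lvert u_x^h\rvert^-,-u_{xx}^h)$, with $\lvert u_x^h\rvert^+=\max\{\frac{u(x)-u(x+h)}h,\frac{u(x)-u(x-h)}h,0\}$, $-\lvert u_x^h\rvert^-=\min\{\frac{u(x)-u(x+h)}h,\frac{u(x)-u(x-h)}h,0\}$,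 $u_{xx}^h=\frac{u(x+h)-2u(x)+u(x-h)}{h^2}$. Consistency with $F$ means $\lim_{h\to0,\,y\to x}F^h[\phi](y)=F[\phi](x)$ for smooth $\phi$.
   Formalization: φ is C^∞ on some (−1−r, 1+r) instead of twice differentiable, K and L lie between positive multiples of $h^{-\alpha}$ and $h^{-\beta}$ for small h, and the error bound holds uniformly in x ∈ (−1,1). Apart from conventions, each condition added here is assumed in the paper as well or is needed for the statement above to hold. *)

(* Defs.v *)
From Stdlib Require Import Reals Lra.
From Coquelicot Require Import Coquelicot.
Open Scope R_scope.

Definition sgn (x : R) : R :=
  if Rlt_dec 0 x then 1 else if Rlt_dec x 0 then -1 else 0.

Definition cbrt (x : R) : R :=
  if Rlt_dec 0 x then Rpower x (1/3)
  else if Rlt_dec x 0 then - Rpower (- x) (1/3) else 0.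

Definition A (p q : R) : R := cbrt (p ^ 2 * q).

Definition Adelta (K L p q : R) : R :=
  sgn q * Rmin (Rabs (A p q)) (Rmin (K * Rabs p) (L * Rabs q)).

Definition pos_part (x : R) : R := Rmax x 0.
Definition neg_part (x : R) : R := Rmin x 0.

Definition Adelta_plus (K L p q : R) : R := Adelta K L (pos_part p) (pos_part q).
Definition Adelta_minus (K L p q : R) : R := Adelta K L (neg_part p) (neg_part q).

Definition dback (u : R -> R) (h x : R) : R := (u x - u (x + h)) / h.
Definition dfwd  (u : R -> R) (h x : R) : R := (u x - u (x - h)) / h.
Definition grad_plus (u : R -> R) (h x : R) : R :=
  Rmax (Rmax (dback u h x) (dfwd u h x)) 0.
Definition mgrad_minus (u : R -> R) (h x : R) : R :=
  Rmin (Rmin (dback u h x) (dfwd u h x)) 0.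
Definition uxx (u : R -> R) (h x : R) : R :=
  (u (x + h) - 2 * u x + u (x - h)) / h ^ 2.

Definition F_scheme (K L h : R) (u : R -> R) (x : R) : R :=
  - (Adelta_plus K L (grad_plus u h x) (- uxx u h x)
     + Adelta_minus K L (mgrad_minus u h x) (- uxx u h x)).

Definition F1D (u : R -> R) (x : R) : R :=
  cbrt ((Derive_n u 1 x) ^ 2 * Derive_n u 2 x).

Definition smooth_on (u : R -> R) (a b : R) : Prop :=
  forall (n : nat) (y : R), a < y < b -> ex_derive (Derive_n u n) y.

(** Convergence order of h^(1-a) + h^(2-b) + h^(min(2a, b/2)) as h -> 0. *)
Definition order (a b : R) : R := Rmin (Rmin (1 - a) (2 - b)) (Rmin (2 * a) (b / 2)).

(* Main.v *)
Require Import Defs.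
From Stdlib Require Import Reals.
From Coquelicot Require Import Coquelicot.
Open Scope R_scope.
From Stdlib Require Import Lra Psatz.


Lemma rp3 x : 0 < x -> Rpower x (1/3) ^ 3 = x.
Proof.
  intro H. rewrite <- Rpower_pow by (unfold Rpower; apply exp_pos).
  rewrite Rpower_mult. replace (1/3 * INR 3) with 1 by (simpl; field).
  apply Rpower_1; auto.
Qed.

Lemma rp_pos x y : 0 < Rpower x y.
Proof. unfold Rpower; apply exp_pos. Qed.

Lemma cbrt_cube x : cbrt x ^ 3 = x.
Proof.
  unfold cbrt. destruct (Rlt_dec 0 x). apply rp3; auto.
  destruct (Rlt_dec x 0). replace ((- Rpower (- x) (1 / 3)) ^ 3) with (- (Rpower (- x) (1/3) ^3)) by ring.
  rewrite rp3; lra. simpl; lra.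
Qed.

Lemma pos_quad a b : b < a -> 0 < (a + b/2)^2 + 3/4*b^2.
Proof. intro H. pose proof (pow2_ge_0 (a+b/2)).
 destruct (Rtotal_order b 0) as [Hb|[Hb|Hb]].
 assert (0 < b^2) by nra. lra.
 subst. replace ((a + 0/2)^2 + 3/4*0^2) with (a*a) by field. nra. 
 assert (0 < b^2) by nra. lra. Qed.

Lemma cube_le a b : a ^ 3 <= b ^ 3 -> a <= b.
Proof.
  intro H. destruct (Rle_dec a b) as [|n]; auto. exfalso.
  assert (b < a) by lra. clear n.
  assert (a^3 - b^3 = (a-b)*((a + b/2)^2 + 3/4*b^2)) by field.
  pose proof (pos_quad a b H0). nra.
Qed.

Lemma cube_lt a b : a ^ 3 < b ^ 3 -> a < b.
Proof.
  intro H. destruct (Rlt_dec a b) as [|n]; auto. exfalso.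
  assert (b <= a) by lra. clear n. assert (b^3 <= a^3).
  { assert (a^3 - b^3 = (a-b)*((a + b/2)^2 + 3/4*b^2)) by field.
    destruct H0. pose proof (pos_quad a b H0). nra. subst; lra. }
  lra.
Qed.

Lemma cube_inj a b : a ^ 3 = b ^ 3 -> a = b.
Proof. intro H. apply Rle_antisym; apply cube_le; lra. Qed.

Lemma cbrt_of_cube y : cbrt (y ^ 3) = y.
Proof. apply cube_inj. apply cbrt_cube. Qed.

Lemma cbrt_mul a b : cbrt (a * b) = cbrt a * cbrt b.
Proof. apply cube_inj. rewrite Rpow_mult_distr, !cbrt_cube. auto. Qed.

Lemma cbrt_opp a : cbrt (- a) = - cbrt a.
Proof. apply cube_inj. replace ((- cbrt a)^3) with (- (cbrt a ^3)) by ring. rewrite !cbrt_cube; auto. Qed.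

Lemma cbrt_le a b : a <= b -> cbrt a <= cbrt b.
Proof. intro H. apply cube_le. rewrite !cbrt_cube; auto. Qed.

Lemma cbrt_lt a b : a < b -> cbrt a < cbrt b.
Proof. intro H. apply cube_lt. rewrite !cbrt_cube; auto. Qed.

Lemma cbrt_0 : cbrt 0 = 0.
Proof. unfold cbrt. destruct (Rlt_dec 0 0); [lra|]. destruct (Rlt_dec 0 0); [lra|auto]. Qed.

Lemma cbrt_nonneg a : 0 <= a -> 0 <= cbrt a.
Proof. intro H. rewrite <- cbrt_0. apply cbrt_le; auto. Qed.

Lemma cbrt_pos a : 0 < a -> 0 < cbrt a.
Proof. intro H. rewrite <- cbrt_0. apply cbrt_lt; auto. Qed.

Lemma cbrt_neg a : a < 0 -> cbrt a < 0.
Proof. intro H. rewrite <- cbrt_0. apply cbrt_lt; auto. Qed.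

Lemma cbrt_abs a : Rabs (cbrt a) = cbrt (Rabs a).
Proof.
  unfold Rabs. destruct (Rcase_abs a); destruct (Rcase_abs (cbrt a)).
  - rewrite cbrt_opp; auto.
  - pose proof (cbrt_neg a r). lra.
  - pose proof (cbrt_nonneg a (Rge_le _ _ r)). assert (cbrt a = 0) by lra.
    assert (a = 0). { rewrite <- (cbrt_cube a), H0. ring. } subst. rewrite ?Ropp_0, cbrt_0; ring.
  - auto.
Qed.

Lemma cbrt_le1 a : 0 <= a -> cbrt a <= 1 + a.
Proof.
  intro H. pose proof (cbrt_nonneg a H). rewrite <- (cbrt_cube a) at 2.
  set (y := cbrt a) in *. destruct (Rle_dec y 1); nra.
Qed.

Lemma cbrt_sq_le1 a : 0 <= a -> cbrt a ^ 2 <= 1 + a.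
Proof.
  intro H. pose proof (cbrt_nonneg a H). rewrite <- (cbrt_cube a) at 2.
  set (y := cbrt a) in *. destruct (Rle_dec y 1); nra.
Qed.

Lemma cube_diff_bound s t : Rabs (s - t) ^ 3 <= 4 * Rabs (s^3 - t^3).
Proof.
  assert (E : s^3 - t^3 = (s-t)*(s^2+s*t+t^2)) by ring.
  assert (G : (s-t)^2 <= 4*(s^2+s*t+t^2)).
  { pose proof (pow2_ge_0 (s+t)). assert (4*(s^2+s*t+t^2) - (s-t)^2 = 3*(s+t)^2) by ring. lra. }
  assert (G0 : 0 <= s^2+s*t+t^2).
  { pose proof (pow2_ge_0 (s+t/2)). pose proof (pow2_ge_0 t). assert (s^2+s*t+t^2 = (s+t/2)^2 + 3/4*t^2) by field. lra. }
  rewrite E, Rabs_mult. rewrite (Rabs_pos_eq (s^2+s*t+t^2)) by lra.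
  replace (Rabs (s - t) ^ 3) with (Rabs (s-t) * (s-t)^2).
  2:{ rewrite <- (pow2_abs (s-t)). ring. }
  pose proof (Rabs_pos (s-t)). nra.
Qed.

Lemma cbrt_lip a b : Rabs (cbrt a - cbrt b) <= 2 * cbrt (Rabs (a - b)).
Proof.
  apply cube_le. pose proof (cube_diff_bound (cbrt a) (cbrt b)).
  rewrite !cbrt_cube in H. replace ((2 * cbrt (Rabs (a - b))) ^ 3) with (8 * cbrt (Rabs (a-b)) ^3) by ring.
  rewrite cbrt_cube. pose proof (Rabs_pos (a-b)). lra.
Qed.

Lemma sq_diff_bound s t : 0 <= s -> 0 <= t ->
  Rabs (s^2 - t^2) ^ 3 <= 8 * (s^3 - t^3)^2.
Proof.
  intros Hs Ht.
  replace (s^2 - t^2) with ((s-t)*(s+t)) by ring.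
  replace ((s^3 - t^3)^2) with ((s-t)^2*(s^2+s*t+t^2)^2) by ring.
  rewrite Rabs_mult, (Rabs_pos_eq (s+t)) by lra.
  set (d := Rabs (s-t)). assert (Hd : 0 <= d) by apply Rabs_pos.
  assert (Hd2 : (s-t)^2 = d^2) by (unfold d; rewrite <- pow2_abs; auto).
  rewrite Hd2.
  assert (dle : d <= s + t) by (unfold d; unfold Rabs; destruct Rcase_abs; lra).
  assert (G : (s+t)^2 <= 2 * (s^2+s*t+t^2)) by nra.
  assert (G2 : (s+t)^4 <= 4 * (s^2+s*t+t^2)^2).
  { assert (0 <= (s+t)^2) by nra. replace ((s+t)^4) with (((s+t)^2)^2) by ring. nra. }
  assert (d * (s+t)^3 <= (s+t)^4).
  { replace ((s+t)^4) with ((s+t)*(s+t)^3) by ring. apply Rmult_le_compat_r; auto. apply pow_le; lra. }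
  replace ((d * (s + t)) ^ 3) with (d^2 * (d*(s+t)^3)) by ring.
  assert (0 <= d^2) by nra.
  apply Rle_trans with (d^2 * (s+t)^4). apply Rmult_le_compat_l; auto.
  replace (8 * (d ^ 2 * (s ^ 2 + s * t + t ^ 2) ^ 2)) with (d^2 * (8* (s ^ 2 + s * t + t ^ 2) ^ 2)) by ring.
  apply Rmult_le_compat_l; auto. nra.
Qed.

Lemma cbrt_sq_lip P p : 0 <= P -> 0 <= p ->
  Rabs (cbrt P ^ 2 - cbrt p ^ 2) <= 2 * cbrt (Rabs (P - p)) ^ 2.
Proof.
  intros HP Hp. apply cube_le.
  pose proof (sq_diff_bound (cbrt P) (cbrt p) (cbrt_nonneg _ HP) (cbrt_nonneg _ Hp)).
  rewrite !cbrt_cube in H.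
  replace ((2 * cbrt (Rabs (P - p)) ^ 2) ^ 3) with (8 * (cbrt (Rabs (P - p)) ^ 3)^2) by ring.
  rewrite cbrt_cube, pow2_abs. lra.
Qed.


Lemma trunc_pure K l s w : 0 < K -> 0 < l -> 0 <= s -> 0 <= w ->
  0 <= s^2*w - Rmin (s^2*w) (Rmin (K*s^3) (l^2*w^3)) <= w^3/K^2 + s^3/l.
Proof.
  intros HK Hl Hs Hw.
  assert (A1 : 0 <= w^3/K^2) by (apply Rdiv_le_0_compat; [apply pow_le; lra| nra]).
  assert (A2 : 0 <= s^3/l) by (apply Rdiv_le_0_compat; [apply pow_le; lra| lra]).
  unfold Rmin. destruct (Rle_dec (K*s^3) (l^2*w^3)); destruct (Rle_dec (s^2*w)).
  - lra.
  - assert (K * s^3 < s^2*w) by lra. assert (0 < s) by (destruct Hs; auto; subst; nra).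
    assert (K*s < w) by (assert (s^2*(K*s) < s^2*w) by nra; nra).
    assert (s^2*w <= w^3/K^2).
    { apply (Rmult_le_reg_r (K^2)). nra. replace (w^3/K^2*K^2) with (w^3) by (field; lra).
      assert ((K*s)^2 <= w^2) by (apply pow_incr; nra).
      replace (s^2*w*K^2) with ((K*s)^2*w) by ring. replace (w^3) with (w^2*w) by ring.
      apply Rmult_le_compat_r; lra. }
    assert (0 <= K*s^3) by (apply Rmult_le_pos; [lra| apply pow_le; lra]). lra.
  - lra.
  - assert (l^2*w^3 < s^2*w) by lra. assert (0 < w) by (destruct Hw; auto; subst; nra).
    assert (l*w < s) by (assert ((l*w)^2 < s^2) by nra; nra).
    assert (s^2*w <= s^3/l).
    { apply (Rmult_le_reg_r l). lra. replace (s^3/l*l) with (s^3) by (field; lra). nra. }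
    assert (0 <= l^2*w^3) by (apply Rmult_le_pos; apply pow_le; lra). lra.
Qed.

Lemma cbrt_P2Q P Q : cbrt (P^2*Q) = cbrt P ^ 2 * cbrt Q.
Proof. replace (P^2*Q) with (P*(P*Q)) by ring. rewrite !cbrt_mul. ring. Qed.

Lemma sgn_abs_cbrt P Q : sgn Q * Rabs (cbrt (P^2*Q)) = cbrt (P^2*Q).
Proof.
  unfold sgn. destruct (Rlt_dec 0 Q).
  - rewrite Rabs_pos_eq. ring. apply cbrt_nonneg. apply Rmult_le_pos; [apply pow2_ge_0|lra].
  - destruct (Rlt_dec Q 0).
    + rewrite Rabs_left1. ring. rewrite <- cbrt_0. apply cbrt_le.
      pose proof (pow2_ge_0 P). nra.
    + assert (Q = 0) by lra. subst. rewrite Rmult_0_r, cbrt_0. ring.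
Qed.

Lemma sgn_bound Q : Rabs (sgn Q) <= 1.
Proof. unfold sgn. destruct Rlt_dec; [|destruct Rlt_dec]; unfold Rabs; destruct Rcase_abs; lra. Qed.

Lemma core K L P p Q q : 0 < K -> 0 < L -> 0 <= P -> 0 <= p ->
  Rabs (sgn Q * Rmin (Rabs (cbrt (P^2*Q))) (Rmin (K*P) (L*Rabs Q)) - cbrt (p^2*q))
  <= 2*cbrt (Rabs (P-p))^2 * (1 + Rabs Q) + (1+p) * (2 * cbrt (Rabs (Q-q)))
     + Rabs Q / K^2 + P / sqrt L.
Proof.
  intros HK HL HP Hp.
  set (a := Rabs (cbrt (P^2*Q))).
  set (m := Rmin a (Rmin (K*P) (L*Rabs Q))).
  assert (Ha : a = cbrt P ^ 2 * cbrt (Rabs Q)).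
  { unfold a. rewrite cbrt_P2Q, Rabs_mult, <- cbrt_abs. rewrite Rabs_pos_eq by apply pow2_ge_0. auto. }
  assert (T : 0 <= a - m <= Rabs Q / K^2 + P / sqrt L).
  { pose proof (trunc_pure K (sqrt L) (cbrt P) (cbrt (Rabs Q)) HK (sqrt_lt_R0 _ HL)
       (cbrt_nonneg _ HP) (cbrt_nonneg _ (Rabs_pos Q))) as H.
    rewrite !cbrt_cube, pow2_sqrt in H by lra. unfold m. rewrite Ha. exact H. }
  assert (E1 : Rabs (sgn Q * m - sgn Q * a) <= a - m).
  { rewrite <- Rmult_minus_distr_l, Rabs_mult. pose proof (sgn_bound Q).
    rewrite (Rabs_minus_sym m a), (Rabs_pos_eq (a - m)) by lra. apply Rle_trans with (1*(a-m)); [apply Rmult_le_compat_r; lra | lra]. }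
  assert (E2 : sgn Q * a = cbrt (P^2*Q)) by apply sgn_abs_cbrt.
  assert (E3 : Rabs (cbrt (P^2*Q) - cbrt (p^2*q)) <=
     2*cbrt (Rabs (P-p))^2 * (1 + Rabs Q) + (1+p) * (2 * cbrt (Rabs (Q-q)))).
  { rewrite !cbrt_P2Q.
    replace (cbrt P ^ 2 * cbrt Q - cbrt p ^ 2 * cbrt q) with
      ((cbrt P ^ 2 - cbrt p ^ 2) * cbrt Q + cbrt p ^ 2 * (cbrt Q - cbrt q)) by ring.
    eapply Rle_trans. apply Rabs_triang. rewrite !Rabs_mult.
    pose proof (cbrt_sq_lip P p HP Hp). pose proof (cbrt_lip Q q).
    rewrite (Rabs_pos_eq (cbrt p ^ 2)) by apply pow2_ge_0.
    rewrite cbrt_abs. pose proof (cbrt_le1 _ (Rabs_pos Q)).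
    pose proof (cbrt_sq_le1 _ Hp). pose proof (Rabs_pos (cbrt Q - cbrt q)).
    pose proof (Rabs_pos (cbrt P ^ 2 - cbrt p ^ 2)).
    pose proof (cbrt_nonneg _ (Rabs_pos Q)). pose proof (pow2_ge_0 (cbrt p)).
    apply Rplus_le_compat.
    - apply Rle_trans with (2 * cbrt (Rabs (P - p)) ^ 2 * cbrt (Rabs Q)).
      apply Rmult_le_compat_r; lra. apply Rmult_le_compat_l; [|lra].
      pose proof (pow2_ge_0 (cbrt (Rabs (P - p)))). lra.
    - apply Rmult_le_compat; lra. }

  replace (sgn Q * m - cbrt (p ^ 2 * q)) with ((sgn Q * m - sgn Q * a) + (sgn Q * a - cbrt (p^2*q))) by ring.
  eapply Rle_trans. apply Rabs_triang. rewrite <- E2 in E3. lra.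
Qed.

Lemma sgn0 : sgn 0 = 0.
Proof. unfold sgn. destruct (Rlt_dec 0 0); [lra|]. destruct (Rlt_dec 0 0); [lra|auto]. Qed.

Lemma bridge K L h u x :
  exists P, (P = grad_plus u h x \/ P = - mgrad_minus u h x) /\
  F_scheme K L h u x = - (sgn (- uxx u h x) * Rmin (Rabs (cbrt (P^2*(- uxx u h x))))
        (Rmin (K*P) (L*Rabs (- uxx u h x)))).
Proof.
  set (Q := - uxx u h x). set (gp := grad_plus u h x). set (gm := mgrad_minus u h x).
  assert (Hgp : 0 <= gp) by (unfold gp, grad_plus; apply Rmax_r).
  assert (Hgm : gm <= 0) by (unfold gm, mgrad_minus; apply Rmin_r).
  unfold F_scheme, Adelta_plus, Adelta_minus, Adelta, A, pos_part, neg_part. fold Q gp gm.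
  destruct (Rtotal_order Q 0) as [HQ|[HQ|HQ]].
  - exists (- gm). split; [right; auto|].
    rewrite (Rmax_right Q 0) by lra. rewrite sgn0, (Rmin_left Q 0) by lra.
    rewrite (Rmin_left gm 0) by lra. rewrite (Rabs_left1 gm) by lra.
    replace ((-gm)^2) with (gm^2) by ring. ring.
  - exists gp. split; [left; auto|]. rewrite HQ. rewrite (Rmax_left 0 0), (Rmin_left 0 0) by lra.
    rewrite sgn0. ring.
  - exists gp. split; [left; auto|].
    rewrite (Rmax_left Q 0) by lra. rewrite (Rmin_right Q 0) by lra. rewrite sgn0.
    rewrite (Rmax_left gp 0) by lra. rewrite (Rabs_pos_eq gp) by lra. ring.
Qed.


Lemma Dn_comp u m j : Derive_n (Derive_n u m) j = Derive_n u (j + m).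
Proof. induction j. reflexivity. simpl. rewrite IHj. reflexivity. Qed.

Lemma exdn u a b m k t : smooth_on u a b -> a < t < b -> ex_derive_n (Derive_n u m) k t.
Proof.
  intros H Ht. destruct k. exact I. simpl. rewrite Dn_comp. apply H; auto.
Qed.

Lemma TL1 f x y : x < y -> (forall k t, x <= t <= y -> ex_derive_n f k t) ->
  exists z, x < z < y /\ f y = f x + (y - x) * Derive_n f 1 z.
Proof.
  intros Hxy H. destruct (Taylor_Lagrange f 0 x y Hxy) as [z [Hz E]].
  { intros; apply H; auto. }
  exists z; split; auto. rewrite E. simpl. field.
Qed.

Lemma TL2 f x y : x < y -> (forall k t, x <= t <= y -> ex_derive_n f k t) ->
  exists z, x < z < y /\ f y = f x + (y - x) * Derive_n f 1 x + (y-x)^2/2 * Derive_n f 2 z.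
Proof.
  intros Hxy H. destruct (Taylor_Lagrange f 1 x y Hxy) as [z [Hz E]].
  { intros; apply H; auto. }
  exists z; split; auto. rewrite E. simpl. field.
Qed.

Lemma TL4 f x y : x < y -> (forall k t, x <= t <= y -> ex_derive_n f k t) ->
  exists z, x < z < y /\ f y = f x + (y - x) * Derive_n f 1 x + (y-x)^2/2 * Derive_n f 2 x
     + (y-x)^3/6 * Derive_n f 3 x + (y-x)^4/24 * Derive_n f 4 z.
Proof.
  intros Hxy H. destruct (Taylor_Lagrange f 3 x y Hxy) as [z [Hz E]].
  { intros; apply H; auto. }
  exists z; split; auto. rewrite E. simpl. field.
Qed.

Section Est.
Variables (u : R -> R) (a b x h M : R).
Hypothesis S : smooth_on u a b.
Hypothesis Hab : a < x - h /\ x + h < b.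
Hypothesis Hh : 0 < h.
Hypothesis HM : forall t, x - h <= t <= x + h ->
  Rabs (Derive_n u 2 t) <= M /\ Rabs (Derive_n u 4 t) <= M.

Lemma exd m : forall k t, x - h <= t <= x + h -> ex_derive_n (Derive_n u m) k t.
Proof. intros k t Ht. apply (exdn u a b); auto; lra. Qed.

Lemma exd0 : forall k t, x - h <= t <= x + h -> ex_derive_n u k t.
Proof. intros k t Ht. apply (exd 0 k t Ht). Qed.

Lemma est_back : Rabs (dback u h x + Derive_n u 1 x) <= M * h.
Proof.
  destruct (TL2 u x (x+h)) as [z [Hz E]]. lra.
  { intros k t Ht. apply exd0. lra. }
  unfold dback. rewrite E. replace (x + h - x) with h by ring.
  replace ((u x - (u x + h * Derive_n u 1 x + h ^ 2 / 2 * Derive_n u 2 z)) / h + Derive_n u 1 x)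
    with (- (h/2) * Derive_n u 2 z) by (field; lra).
  rewrite Rabs_mult, Rabs_Ropp, Rabs_pos_eq by lra.
  pose proof (proj1 (HM z ltac:(lra))) as H2. pose proof (Rabs_pos (Derive_n u 2 z)). apply Rle_trans with (h/2*M); [apply Rmult_le_compat_l; lra| nra].
Qed.

Lemma est_fwd : Rabs (dfwd u h x - Derive_n u 1 x) <= 2 * M * h.
Proof.
  destruct (TL2 u (x-h) x) as [z1 [Hz1 E1]]. lra.
  { intros k t Ht. apply exd0. lra. }
  destruct (TL1 (Derive_n u 1) (x-h) x) as [z2 [Hz2 E2]]. lra.
  { intros k t Ht. apply exd. lra. }
  unfold dfwd. rewrite E1, E2. replace (x - (x - h)) with h by ring.
  change (Derive_n (Derive_n u 1) 1 z2) with (Derive_n u 2 z2).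
  replace ((u (x - h) + h * Derive_n u 1 (x - h) + h ^ 2 / 2 * Derive_n u 2 z1 - u (x - h)) / h -
     (Derive_n u 1 (x - h) + h * Derive_n u 2 z2)) with (h * (/2 * Derive_n u 2 z1 - Derive_n u 2 z2))
    by (field; lra).
  rewrite Rabs_mult, Rabs_pos_eq by lra.
  pose proof (proj1 (HM z1 ltac:(lra))) as H1. pose proof (proj1 (HM z2 ltac:(lra))) as H2.
  assert (Rabs (/ 2 * Derive_n u 2 z1 - Derive_n u 2 z2) <= 2 * M).
  { eapply Rle_trans. apply Rabs_triang. rewrite Rabs_Ropp, Rabs_mult, Rabs_pos_eq by lra. pose proof (Rabs_pos (Derive_n u 2 z2)). lra. }
  nra.
Qed.

Lemma est_xx : Rabs (uxx u h x - Derive_n u 2 x) <= 2 * M * h^2.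
Proof.
  destruct (TL4 u (x-h) (x+h)) as [z1 [Hz1 E1]]. lra.
  { intros k t Ht. apply exd0. lra. }
  destruct (TL4 u (x-h) x) as [z2 [Hz2 E2]]. lra.
  { intros k t Ht. apply exd0. lra. }
  destruct (TL2 (Derive_n u 2) (x-h) x) as [z3 [Hz3 E3]]. lra.
  { intros k t Ht. apply exd. lra. }
  change (Derive_n (Derive_n u 2) 1 (x - h)) with (Derive_n u 3 (x - h)) in E3.
  change (Derive_n (Derive_n u 2) 2 z3) with (Derive_n u 4 z3) in E3.
  unfold uxx. rewrite E1, E2, E3. replace (x + h - (x - h)) with (2*h) by ring.
  replace (x - (x - h)) with h by ring.
  match goal with |- Rabs ?e <= _ => replace e with
    (h^2 * (2/3 * Derive_n u 4 z1 - /12 * Derive_n u 4 z2 - /2 * Derive_n u 4 z3)) by (field; lra) end.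
  rewrite Rabs_mult, (Rabs_pos_eq (h^2)) by nra.
  pose proof (proj2 (HM z1 ltac:(lra))) as H1. pose proof (proj2 (HM z2 ltac:(lra))) as H2. pose proof (proj2 (HM z3 ltac:(lra))) as H3.
  assert (Rabs (2/3 * Derive_n u 4 z1 - /12 * Derive_n u 4 z2 - /2 * Derive_n u 4 z3) <= 2 * M).
  { unfold Rminus. eapply Rle_trans. apply Rabs_triang. eapply Rle_trans. apply Rplus_le_compat_r. apply Rabs_triang.
    rewrite !Rabs_Ropp, !Rabs_mult, !Rabs_pos_eq by lra. rewrite (Rabs_pos_eq (/12)), (Rabs_pos_eq (/2)) by lra. pose proof (Rabs_pos (Derive_n u 4 z2)). lra. }
  assert (0 < h^2) by nra. nra.
Qed.

End Est.


Lemma cont_Dn u a b k t : smooth_on u a b -> a < t < b -> continuity_pt (Derive_n u k) t.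
Proof.
  intros S Ht. apply continuity_pt_filterlim. apply (ex_derive_continuous (Derive_n u k) t). apply S; auto.
Qed.

Lemma bound_one u a b c d k : smooth_on u a b -> a < c -> c <= d -> d < b ->
  exists Mk, forall t, c <= t <= d -> Rabs (Derive_n u k t) <= Mk.
Proof.
  intros S H1 H2 H3.
  destruct (continuity_ab_maj (fun t => Rabs (Derive_n u k t)) c d H2) as [m [Hm _]].
  { intros t Ht. apply (continuity_pt_comp (Derive_n u k) Rabs). apply (cont_Dn u a b); [exact S| lra].
    apply Rcontinuity_abs. }
  exists (Rabs (Derive_n u k m)). auto.
Qed.

Lemma max3_lip a b c d e : Rabs (a - c) <= e -> Rabs (b - d) <= e ->
  Rabs (Rmax (Rmax a b) 0 - Rmax (Rmax c d) 0) <= e.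
Proof.
  intros H1 H2. unfold Rmax in *. revert H1 H2.
  repeat destruct Rle_dec; unfold Rabs; repeat destruct Rcase_abs; intros; lra.
Qed.

Lemma min3_lip a b c d e : Rabs (a - c) <= e -> Rabs (b - d) <= e ->
  Rabs (- Rmin (Rmin a b) 0 - - Rmin (Rmin c d) 0) <= e.
Proof.
  intros H1 H2. unfold Rmin in *. revert H1 H2.
  repeat destruct Rle_dec; unfold Rabs; repeat destruct Rcase_abs; intros; lra.
Qed.

Lemma abs_max3 y : Rabs y = Rmax (Rmax (- y) y) 0.
Proof. unfold Rmax; repeat destruct Rle_dec; unfold Rabs; destruct Rcase_abs; lra. Qed.

Lemma abs_min3 y : Rabs y = - Rmin (Rmin (- y) y) 0.
Proof. unfold Rmin; repeat destruct Rle_dec; unfold Rabs; destruct Rcase_abs; lra. Qed.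

Definition Cst1 (M : R) := 2 * (1+2*M)^2 * (1+3*M) + 2 * (1+M) * (1+2*M).

Lemma acc_point u a b x h M K L : smooth_on u a b -> a < x - h -> x + h < b -> 0 < h -> h <= 1 ->
  0 < K -> 0 < L -> 0 <= M ->
  (forall t, x - h <= t <= x + h -> Rabs (Derive_n u 1 t) <= M /\ Rabs (Derive_n u 2 t) <= M
       /\ Rabs (Derive_n u 4 t) <= M) ->
  Rabs (F_scheme K L h u x - F1D u x) <= Cst1 M * cbrt h ^ 2 + 3*M / K^2 + 3*M / sqrt L.
Proof.
  intros S Ha Hb Hh Hh1 HK HL HM0 HM.
  assert (HM' : forall t, x - h <= t <= x + h ->
     Rabs (Derive_n u 2 t) <= M /\ Rabs (Derive_n u 4 t) <= M) by (intros t Ht; destruct (HM t Ht) as [? [? ?]]; split; auto).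
  pose proof (est_back u a b x h M S (conj Ha Hb) Hh HM') as Eb.
  pose proof (est_fwd u a b x h M S (conj Ha Hb) Hh HM') as Ef.
  pose proof (est_xx u a b x h M S (conj Ha Hb) Hh HM') as Ex.
  destruct (bridge K L h u x) as [P [HP EF]].
  set (p := Rabs (Derive_n u 1 x)). set (q := - Derive_n u 2 x). set (Q := - uxx u h x) in *.
  assert (Hp : 0 <= p) by apply Rabs_pos.
  assert (HpM : p <= M) by (exact (proj1 (HM x ltac:(lra)))).
  assert (HqM : Rabs q <= M) by (unfold q; rewrite Rabs_Ropp; exact (proj1 (proj2 (HM x ltac:(lra))))).
  assert (HPp : Rabs (P - p) <= 2*M*h).
  { assert (Eb' : Rabs (dback u h x - - Derive_n u 1 x) <= 2*M*h).
    { replace (dback u h x - - Derive_n u 1 x) with (dback u h x + Derive_n u 1 x) by ring.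
      assert (0 <= M*h) by (apply Rmult_le_pos; lra). lra. }
    destruct HP as [HP|HP]; rewrite HP; unfold p.
    - rewrite (abs_max3 (Derive_n u 1 x)). unfold grad_plus. apply max3_lip; auto.
    - rewrite (abs_min3 (Derive_n u 1 x)). unfold mgrad_minus. apply min3_lip; auto. }
  assert (HQq : Rabs (Q - q) <= 2*M*h^2).
  { unfold Q, q. replace (- uxx u h x - - Derive_n u 2 x) with (- (uxx u h x - Derive_n u 2 x)) by ring.
    rewrite Rabs_Ropp. auto. }
  assert (HP0 : 0 <= P).
  { destruct HP as [HP|HP]; rewrite HP. unfold grad_plus; apply Rmax_r.
    unfold mgrad_minus. pose proof (Rmin_r (Rmin (dback u h x) (dfwd u h x)) 0). lra. }
  assert (Hh2 : h^2 <= 1) by (replace (h^2) with (h*h) by ring; replace 1 with (1*1) by ring; apply Rmult_le_compat; lra).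
  assert (Mh1 : M*h <= M) by (replace M with (M*1) at 2 by ring; apply Rmult_le_compat_l; lra).
  assert (Mh2 : M*h^2 <= M) by (replace M with (M*1) at 2 by ring; apply Rmult_le_compat_l; lra).
  assert (HQ : Rabs Q <= 3*M).
  { replace Q with (q + (Q - q)) by ring. eapply Rle_trans. apply Rabs_triang. lra. }
  assert (HPM : P <= 3*M).
  { replace P with (p + (P - p)) by ring. pose proof (Rle_abs (P - p)). lra. }
  assert (EF1 : F1D u x = - cbrt (p^2 * q)).
  { unfold F1D, p, q. rewrite pow2_abs, <- cbrt_opp. f_equal. ring. }
  assert (Hc := core K L P p Q q HK HL HP0 Hp).
  rewrite EF, EF1.
  replace (- (sgn Q * Rmin (Rabs (cbrt (P ^ 2 * Q))) (Rmin (K * P) (L * Rabs Q))) - - cbrt (p ^ 2 * q))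
    with (- (sgn Q * Rmin (Rabs (cbrt (P ^ 2 * Q))) (Rmin (K * P) (L * Rabs Q)) - cbrt (p ^ 2 * q))) by ring.
  rewrite Rabs_Ropp. eapply Rle_trans. exact Hc.
  set (ch := cbrt h). assert (Hch : 0 <= ch) by (apply cbrt_nonneg; lra).
  assert (B1 : cbrt (Rabs (P - p)) <= (1+2*M) * ch).
  { eapply Rle_trans. apply cbrt_le. exact HPp. rewrite cbrt_mul. apply Rmult_le_compat_r; auto.
    apply cbrt_le1. lra. }
  assert (B1' : cbrt (Rabs (P - p)) ^ 2 <= (1+2*M)^2 * ch^2).
  { rewrite <- Rpow_mult_distr. apply pow_incr. split; auto. apply cbrt_nonneg, Rabs_pos. }
  assert (B2 : cbrt (Rabs (Q - q)) <= (1+2*M) * ch^2).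
  { eapply Rle_trans. apply cbrt_le. exact HQq. rewrite cbrt_mul.
    replace (h^2) with (h*h) by ring. rewrite (cbrt_mul h h). fold ch. replace (ch * ch) with (ch^2) by ring.
    apply Rmult_le_compat_r. apply pow2_ge_0. apply cbrt_le1. lra. }
  assert (B3 : Rabs Q / K^2 <= 3*M / K^2).
  { apply Rmult_le_compat_r; auto. apply Rlt_le, Rinv_0_lt_compat. apply pow_lt; lra. }
  assert (B4 : P / sqrt L <= 3*M / sqrt L).
  { apply Rmult_le_compat_r; auto. apply Rlt_le, Rinv_0_lt_compat. apply sqrt_lt_R0; auto. }
  unfold Cst1.
  assert (T1 : 2 * cbrt (Rabs (P - p)) ^ 2 * (1 + Rabs Q) <= 2 * ((1+2*M)^2 * ch^2) * (1+3*M)).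
  { apply Rmult_le_compat. pose proof (pow2_ge_0 (cbrt (Rabs (P - p)))). lra.
    pose proof (Rabs_pos Q); lra. lra. lra. }
  assert (T2 : (1 + p) * (2 * cbrt (Rabs (Q - q))) <= (1+M) * (2 * ((1+2*M) * ch^2))).
  { apply Rmult_le_compat. lra. pose proof (cbrt_nonneg _ (Rabs_pos (Q - q))). lra. lra. lra. }
  lra.
Qed.


Lemma rp_anti h e1 e2 : 0 < h -> h <= 1 -> e1 <= e2 -> Rpower h e2 <= Rpower h e1.
Proof.
  intros H0 H1 He. unfold Rpower.
  assert (ln h <= 0).
  { destruct H1 as [H1|H1]. pose proof (ln_increasing h 1 H0 H1). rewrite ln_1 in H. lra.
    subst. rewrite ln_1. lra. }
  assert (e2 * ln h <= e1 * ln h) by nra.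
  destruct H2 as [H2|H2]. left; apply exp_increasing; auto. rewrite H2; lra.
Qed.

Lemma rp_nonneg h e : 0 <= Rpower h e.
Proof. left; apply rp_pos. Qed.

Lemma cbrt_rp h : 0 < h -> cbrt h = Rpower h (1/3).
Proof. intro H. unfold cbrt. destruct (Rlt_dec 0 h); [auto|lra]. Qed.

Lemma cbrt_sq_rp h : 0 < h -> cbrt h ^ 2 = Rpower h (2/3).
Proof. intro H. rewrite cbrt_rp by auto. replace (2/3) with (1/3+1/3) by field.
  rewrite Rpower_plus. ring. Qed.

Lemma rp_small s eta : 0 < s -> 0 < eta -> exists d, 0 < d /\ forall h, 0 < h < d -> Rpower h s < eta.
Proof.
  intros Hs He. exists (Rpower eta (/s)). split. apply rp_pos.
  intros h [H0 H1]. assert (Rpower h s < Rpower (Rpower eta (/ s)) s).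
  { unfold Rpower at 1 3. apply exp_increasing. apply Rmult_lt_compat_l; auto.
    apply ln_increasing; auto. }
  rewrite Rpower_mult in H. replace (/s * s) with 1 in H by (field; lra).
  rewrite Rpower_1 in H; auto.
Qed.

Lemma K_bound K h cK al : 0 < h -> 0 < cK -> cK * Rpower h (- al) <= K ->
  0 < K /\ / K^2 <= Rpower h (2*al) / cK^2.
Proof.
  intros Hh Hc HK. rewrite Rpower_Ropp in HK.
  pose proof (rp_pos h al) as Hr.
  assert (0 < cK * / Rpower h al) by (apply Rmult_lt_0_compat; [lra| apply Rinv_0_lt_compat; auto]).
  assert (HK0 : 0 < K) by lra. split; auto.
  assert (cK <= K * Rpower h al).
  { apply (Rmult_le_reg_r (/ Rpower h al)). apply Rinv_0_lt_compat; auto.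
    replace (K * Rpower h al * / Rpower h al) with K by (field; lra). lra. }
  replace (2*al) with (al+al) by ring. rewrite Rpower_plus.
  assert (cK^2 <= (K * Rpower h al)^2) by (apply pow_incr; lra).
  apply (Rmult_le_reg_r (K^2 * cK^2)). apply Rmult_lt_0_compat; apply pow_lt; lra.
  replace (/ K ^ 2 * (K ^ 2 * cK ^ 2)) with (cK^2) by (field; lra).
  replace (Rpower h al * Rpower h al / cK ^ 2 * (K ^ 2 * cK ^ 2)) with ((K * Rpower h al)^2) by (field; lra).
  auto.
Qed.

Lemma L_bound L h cL be : 0 < h -> 0 < cL -> cL * Rpower h (- be) <= L ->
  0 < L /\ / sqrt L <= Rpower h (be/2) / sqrt cL.
Proof.
  intros Hh Hc HL. rewrite Rpower_Ropp in HL.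
  pose proof (rp_pos h be) as Hr.
  assert (0 < cL * / Rpower h be) by (apply Rmult_lt_0_compat; [lra| apply Rinv_0_lt_compat; auto]).
  assert (HL0 : 0 < L) by lra. split; auto.
  assert (cL <= L * Rpower h be).
  { apply (Rmult_le_reg_r (/ Rpower h be)). apply Rinv_0_lt_compat; auto.
    replace (L * Rpower h be * / Rpower h be) with L by (field; lra). lra. }
  assert (E : Rpower h be = Rpower h (be/2) * Rpower h (be/2)).
  { rewrite <- Rpower_plus. f_equal. field. }
  assert (sqrt cL <= sqrt L * Rpower h (be/2)).
  { rewrite E in H0. rewrite <- (sqrt_square (Rpower h (be/2))) by apply rp_nonneg.
    rewrite <- sqrt_mult by (try lra; apply Rmult_le_pos; apply rp_nonneg).
    apply sqrt_le_1; lra. }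
  pose proof (sqrt_lt_R0 _ HL0). pose proof (sqrt_lt_R0 _ Hc).
  apply (Rmult_le_reg_r (sqrt L * sqrt cL)). nra.
  replace (/ sqrt L * (sqrt L * sqrt cL)) with (sqrt cL) by (field; lra).
  replace (Rpower h (be / 2) / sqrt cL * (sqrt L * sqrt cL)) with (sqrt L * Rpower h (be / 2)) by (field; lra).
  auto.
Qed.

Lemma C1_nonneg M : 0 <= M -> 0 <= Cst1 M.
Proof. intro H. unfold Cst1. apply Rplus_le_le_0_compat; repeat apply Rmult_le_pos; try lra; apply pow2_ge_0. Qed.

Lemma accuracy (alpha beta : R) (K L : R -> R) (phi : R -> R) (r : R) :
  0 < alpha < 1 -> 0 < beta < 2 ->
  (exists cK CK cL CL h0 : R,
     0 < cK /\ 0 < CK /\ 0 < cL /\ 0 < CL /\ 0 < h0 /\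
     forall h, 0 < h < h0 ->
       cK * Rpower h (- alpha) <= K h <= CK * Rpower h (- alpha) /\
       cL * Rpower h (- beta) <= L h <= CL * Rpower h (- beta) /\
       1 <= K h * sqrt (L h)) ->
  0 < r -> smooth_on phi (-1 - r) (1 + r) ->
  exists C h1, 0 < C /\ 0 < h1 /\
     forall h x, 0 < h < h1 -> -1 < x < 1 ->
       Rabs (F_scheme (K h) (L h) h phi x - F1D phi x)
       <= C * (Rpower h (1 - alpha) + Rpower h (2 - beta)
               + Rpower h (Rmin (2 * alpha) (beta / 2))).
Proof.
  intros Ha Hb [cK [CK [cL [CL [h0 [HcK [HCK [HcL [HCL [Hh0 HKL]]]]]]]]]] Hr S.
  destruct (bound_one phi (-1-r) (1+r) (-1 - r/2) (1 + r/2) 1 S) as [M1 HM1]; try lra.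
  destruct (bound_one phi (-1-r) (1+r) (-1 - r/2) (1 + r/2) 2 S) as [M2 HM2]; try lra.
  destruct (bound_one phi (-1-r) (1+r) (-1 - r/2) (1 + r/2) 4 S) as [M4 HM4]; try lra.
  set (M := Rabs M1 + Rabs M2 + Rabs M4).
  assert (HM0 : 0 <= M) by (unfold M; pose proof (Rabs_pos M1); pose proof (Rabs_pos M2); pose proof (Rabs_pos M4); lra).
  set (A1 := 3 * M / cK^2). set (A2 := 3 * M / sqrt cL).
  assert (HA1 : 0 <= A1) by (unfold A1; apply Rmult_le_pos; [lra| apply Rlt_le, Rinv_0_lt_compat, pow_lt; lra]).
  assert (HA2 : 0 <= A2) by (unfold A2; apply Rmult_le_pos; [lra| apply Rlt_le, Rinv_0_lt_compat, sqrt_lt_R0; lra]).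
  pose proof (C1_nonneg M HM0) as HC1.
  exists (Cst1 M + A1 + A2 + 1), (Rmin (Rmin 1 (r/2)) h0).
  split; [lra|]. split. { apply Rmin_pos; [apply Rmin_pos|]; lra. }
  intros h x Hh Hx.
  assert (Hh1 : h <= 1) by (pose proof (Rmin_l (Rmin 1 (r/2)) h0); pose proof (Rmin_l 1 (r/2)); lra).
  assert (Hhr : h <= r/2) by (pose proof (Rmin_l (Rmin 1 (r/2)) h0); pose proof (Rmin_r 1 (r/2)); lra).
  assert (Hhh0 : h < h0) by (pose proof (Rmin_r (Rmin 1 (r/2)) h0); lra).
  destruct (HKL h (conj (proj1 Hh) Hhh0)) as [[HK1 _] [[HL1 _] _]].
  destruct (K_bound (K h) h cK alpha (proj1 Hh) HcK HK1) as [HK0 HK].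
  destruct (L_bound (L h) h cL beta (proj1 Hh) HcL HL1) as [HL0 HL].
  assert (HP := acc_point phi (-1-r) (1+r) x h M (K h) (L h) S ltac:(lra) ltac:(lra) (proj1 Hh) Hh1 HK0 HL0 HM0).
  assert (E := HP ltac:(intros t Ht; pose proof (Rle_abs M1); pose proof (Rle_abs M2); pose proof (Rle_abs M4);
       pose proof (Rabs_pos M1); pose proof (Rabs_pos M2); pose proof (Rabs_pos M4);
       split; [|split]; [pose proof (HM1 t ltac:(lra)) | pose proof (HM2 t ltac:(lra)) | pose proof (HM4 t ltac:(lra))];
       unfold M; lra)).
  clear HP. eapply Rle_trans. exact E.
  rewrite cbrt_sq_rp by lra.
  set (X := Rpower h (1 - alpha) + Rpower h (2 - beta) + Rpower h (Rmin (2 * alpha) (beta / 2))).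
  assert (HX0 : 0 <= X) by (unfold X; pose proof (rp_nonneg h (1-alpha)); pose proof (rp_nonneg h (2-beta));
     pose proof (rp_nonneg h (Rmin (2 * alpha) (beta / 2))); lra).
  assert (R1 : Rpower h (2/3) <= X).
  { unfold X. pose proof (rp_nonneg h (1-alpha)); pose proof (rp_nonneg h (2-beta));
     pose proof (rp_nonneg h (Rmin (2 * alpha) (beta / 2))).
    destruct (Rle_dec alpha (1/3)).
    - assert (Rpower h (2/3) <= Rpower h (Rmin (2 * alpha) (beta / 2))).
      { apply rp_anti; try lra. pose proof (Rmin_l (2*alpha) (beta/2)). lra. }
      lra.
    - assert (Rpower h (2/3) <= Rpower h (1 - alpha)) by (apply rp_anti; lra). lra. }
  assert (R2 : Rpower h (2*alpha) <= X).
  { unfold X. pose proof (rp_nonneg h (1-alpha)); pose proof (rp_nonneg h (2-beta)).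
    assert (Rpower h (2*alpha) <= Rpower h (Rmin (2 * alpha) (beta / 2))) by (apply rp_anti; try lra; apply Rmin_l).
    lra. }
  assert (R3 : Rpower h (beta/2) <= X).
  { unfold X. pose proof (rp_nonneg h (1-alpha)); pose proof (rp_nonneg h (2-beta)).
    assert (Rpower h (beta/2) <= Rpower h (Rmin (2 * alpha) (beta / 2))) by (apply rp_anti; try lra; apply Rmin_r).
    lra. }
  assert (T1 : Cst1 M * Rpower h (2/3) <= Cst1 M * X) by (apply Rmult_le_compat_l; auto).
  assert (T2 : 3 * M / K h ^ 2 <= A1 * X).
  { unfold A1. unfold Rdiv. apply Rle_trans with (3 * M * (Rpower h (2 * alpha) / cK ^ 2)).
    apply Rmult_le_compat_l; lra.
    replace (3 * M * (Rpower h (2 * alpha) / cK ^ 2)) with (3 * M * / cK ^ 2 * Rpower h (2*alpha)) by (field; lra).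
    apply Rmult_le_compat_l; auto. }
  assert (T3 : 3 * M / sqrt (L h) <= A2 * X).
  { unfold A2. unfold Rdiv. apply Rle_trans with (3 * M * (Rpower h (beta/2) / sqrt cL)).
    apply Rmult_le_compat_l; lra.
    replace (3 * M * (Rpower h (beta/2) / sqrt cL)) with (3 * M * / sqrt cL * Rpower h (beta/2))
      by (field; apply Rgt_not_eq, sqrt_lt_R0; lra).
    apply Rmult_le_compat_l; auto. }
  lra.
Qed.


Ltac dmin := repeat match goal with |- context [Rle_dec ?a ?b] => destruct (Rle_dec a b) end.

Lemma order_opt : order (1/3) (4/3) = 2/3 /\
   forall a b, 0 < a < 1 -> 0 < b < 2 ->
     order a b <= order (1/3) (4/3) /\
     (order a b = order (1/3) (4/3) -> a = 1/3 /\ b = 4/3).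
Proof.
  assert (E : order (1/3) (4/3) = 2/3) by (unfold order, Rmin; dmin; lra).
  split; auto. intros a b Ha Hb. rewrite E. unfold order.
  pose proof (Rmin_l (Rmin (1-a) (2-b)) (Rmin (2*a) (b/2))).
  pose proof (Rmin_r (Rmin (1-a) (2-b)) (Rmin (2*a) (b/2))).
  pose proof (Rmin_l (1-a) (2-b)). pose proof (Rmin_r (1-a) (2-b)).
  pose proof (Rmin_l (2*a) (b/2)). pose proof (Rmin_r (2*a) (b/2)).
  split. destruct (Rle_dec a (1/3)); lra. intros; split; lra.
Qed.

Lemma F1D_cont (phi : R -> R) (r x : R) : 0 < r -> smooth_on phi (-1 - r) (1 + r) -> -1 < x < 1 ->
  forall eps, 0 < eps -> exists d, 0 < d /\ forall y, Rabs (y - x) < d -> Rabs (F1D phi y - F1D phi x) < eps.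
Proof.
  intros Hr S Hx eps Heps.
  assert (Hg : continuity_pt (mult_fct (mult_fct (Derive_n phi 1) (Derive_n phi 1)) (Derive_n phi 2)) x).
  { repeat apply continuity_pt_mult; apply (cont_Dn phi (-1-r) (1+r)); auto; lra. }
  unfold continuity_pt, continue_in, limit1_in, limit_in in Hg.
  destruct (Hg ((eps/4)^3)) as [alp [Halp Hd]]. { apply pow_lt; lra. }
  exists alp. split; auto. intros y Hy.
  destruct (Req_dec y x) as [->|Hne]. { unfold Rminus; rewrite Rplus_opp_r, Rabs_R0; lra. }
  assert (Hgy := Hd y). simpl in Hgy. unfold R_dist, mult_fct, D_x, no_cond in Hgy.
  assert (Hgy' := Hgy ltac:(split; [split; auto| auto])).
  unfold F1D. eapply Rle_lt_trans. apply cbrt_lip.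
  assert (cbrt (Rabs (Derive_n phi 1 y ^ 2 * Derive_n phi 2 y - Derive_n phi 1 x ^ 2 * Derive_n phi 2 x)) < eps/4).
  { rewrite <- (cbrt_of_cube (eps/4)). apply cbrt_lt.
    replace (Derive_n phi 1 y ^ 2 * Derive_n phi 2 y - Derive_n phi 1 x ^ 2 * Derive_n phi 2 x)
      with (Derive_n phi 1 y * Derive_n phi 1 y * Derive_n phi 2 y - Derive_n phi 1 x * Derive_n phi 1 x * Derive_n phi 2 x)
      by ring. auto. }
  lra.
Qed.

Theorem mainTheorem11
  (alpha beta : R) (K L : R -> R) (phi : R -> R) (r : R) :
  0 < alpha < 1 -> 0 < beta < 2 ->
  (exists cK CK cL CL h0 : R,
     0 < cK /\ 0 < CK /\ 0 < cL /\ 0 < CL /\ 0 < h0 /\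
     forall h, 0 < h < h0 ->
       cK * Rpower h (- alpha) <= K h <= CK * Rpower h (- alpha) /\
       cL * Rpower h (- beta) <= L h <= CL * Rpower h (- beta) /\
       1 <= K h * sqrt (L h)) ->
  0 < r -> smooth_on phi (-1 - r) (1 + r) ->
  (forall x, -1 < x < 1 ->
     forall eps, 0 < eps -> exists delta, 0 < delta /\
       forall h y, 0 < h < delta -> Rabs (y - x) < delta ->
         Rabs (F_scheme (K h) (L h) h phi y - F1D phi x) < eps) /\
  (exists C h1, 0 < C /\ 0 < h1 /\
     forall h x, 0 < h < h1 -> -1 < x < 1 ->
       Rabs (F_scheme (K h) (L h) h phi x - F1D phi x)
       <= C * (Rpower h (1 - alpha) + Rpower h (2 - beta)
               + Rpower h (Rmin (2 * alpha) (beta / 2)))) /\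
  (order (1/3) (4/3) = 2/3 /\
   forall a b, 0 < a < 1 -> 0 < b < 2 ->
     order a b <= order (1/3) (4/3) /\
     (order a b = order (1/3) (4/3) -> a = 1/3 /\ b = 4/3)) /\
  (alpha = 1/3 -> beta = 4/3 ->
   exists C h1, 0 < C /\ 0 < h1 /\
     forall h x, 0 < h < h1 -> -1 < x < 1 ->
       Rabs (F_scheme (K h) (L h) h phi x - F1D phi x) <= C * Rpower h (2/3)).
Proof.
  intros Ha Hb HKL Hr S.
  pose proof (accuracy alpha beta K L phi r Ha Hb HKL Hr S) as Acc.
  split; [|split; [exact Acc| split; [exact order_opt|]]].
  - intros x Hx eps Heps.
    destruct Acc as [C [h1 [HC [Hh1 Hacc]]]].
    destruct (F1D_cont phi r x Hr S Hx (eps/2)) as [d0 [Hd0 Hc]]; [lra|].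
    set (eta := eps / (6 * C)). assert (Heta : 0 < eta) by (unfold eta; apply Rdiv_lt_0_compat; lra).
    assert (Hm : 0 < Rmin (2 * alpha) (beta / 2)) by (apply Rmin_pos; lra).
    destruct (rp_small (1 - alpha) eta) as [da [Hda Ra]]; try lra.
    destruct (rp_small (2 - beta) eta) as [db [Hdb Rb]]; try lra.
    destruct (rp_small _ eta Hm Heta) as [dc [Hdc Rc]].
    set (d := Rmin (Rmin (Rmin d0 da) (Rmin db dc)) (Rmin h1 (Rmin (x+1) (1-x)))).
    assert (Hd : 0 < d) by (unfold d; repeat apply Rmin_pos; lra).
    exists d. split; auto. intros h y Hh Hy.
    assert (d <= d0 /\ d <= da /\ d <= db /\ d <= dc /\ d <= h1 /\ d <= x + 1 /\ d <= 1 - x) as [D1 [D2 [D3 [D4 [D5 [D6 D7]]]]]].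
    { unfold d. pose proof (Rmin_l (Rmin (Rmin d0 da) (Rmin db dc)) (Rmin h1 (Rmin (x+1) (1-x)))).
      pose proof (Rmin_r (Rmin (Rmin d0 da) (Rmin db dc)) (Rmin h1 (Rmin (x+1) (1-x)))).
      pose proof (Rmin_l (Rmin d0 da) (Rmin db dc)). pose proof (Rmin_r (Rmin d0 da) (Rmin db dc)).
      pose proof (Rmin_l d0 da). pose proof (Rmin_r d0 da). pose proof (Rmin_l db dc). pose proof (Rmin_r db dc).
      pose proof (Rmin_l h1 (Rmin (x+1) (1-x))). pose proof (Rmin_r h1 (Rmin (x+1) (1-x))).
      pose proof (Rmin_l (x+1) (1-x)). pose proof (Rmin_r (x+1) (1-x)). lra. }
    assert (Hy' : -1 < y < 1) by (apply Rabs_def2 in Hy; lra).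
    assert (A1 := Hacc h y ltac:(lra) Hy').
    assert (A2 := Hc y ltac:(lra)).
    assert (Ra' := Ra h ltac:(lra)). assert (Rb' := Rb h ltac:(lra)). assert (Rc' := Rc h ltac:(lra)).
    assert (C * (Rpower h (1 - alpha) + Rpower h (2 - beta) + Rpower h (Rmin (2 * alpha) (beta / 2)))
              < C * (3 * eta)) by (apply Rmult_lt_compat_l; lra).
    assert (C * (3 * eta) = eps / 2) by (unfold eta; field; lra).
    replace (F_scheme (K h) (L h) h phi y - F1D phi x) with
      ((F_scheme (K h) (L h) h phi y - F1D phi y) + (F1D phi y - F1D phi x)) by ring.
    eapply Rle_lt_trans. apply Rabs_triang. lra.
  - intros Ea Eb. destruct Acc as [C [h1 [HC [Hh1 Hacc]]]].
    exists (3 * C), h1. split; [lra|]. split; auto. intros h x Hh Hx.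
    assert (E := Hacc h x Hh Hx). rewrite Ea, Eb in E.
    replace (1 - 1/3) with (2/3) in E by field. replace (2 - 4/3) with (2/3) in E by field.
    replace (Rmin (2 * (1/3)) (4/3/2)) with (2/3) in E by (unfold Rmin; destruct Rle_dec; lra).
    lra.
Qed.
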